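(* Let $n\ge 2$ and let $\epsilon_n$ be a primitive $n$-th root of unity in $\mathbb{C}$. On the vector space $\mathscr{C}_n=\mathbb{C}[z]/(z^n-1)$ define the multiplication $$p(z)\circ q(z)=p(\epsilon_n z)\,q(\epsilon_n z)\mod (z^n-1).$$ Then $(\mathscr{C}_n,\circ)$ is an $n$-dimensional commutative medial isospectral algebra over $\mathbb{C}$. Furthermore, every $p\in\mathscr{C}_n$ satisfies $p^{n+1}=\beta(p)\,p$ (principal powers with respect to $\circ$), where $$\beta(p)=p(1)\,p(\epsilon_n)\,p(\epsilon_n^2)\cdots p(\epsilon_n^{n-1}),$$ and $\beta:\mathscr{C}_n\to\mathbb{C}$ is a multiplicative homomorphism.
   Context: An algebra is medial if $(xy)(zw)=(xz)(yw)$ for all $x,y,z,w$. For an idempotent $c$, the spectrum of $c$ is the multiset of eigenvalues of $L_c:x\mapsto cx$; an algebra is isospectral if all its nonzero idempotents have the same spectrum. Principal powers: $x^1=x$, $x^{k+1}=x\circ x^k$. $p(\alpha)$ for $p\in\mathscr{C}_n$ and $\alpha^n=1$ is well defined. *)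

(* Defs.v *)
From HB Require Import structures.
From mathcomp Require Import all_boot all_order all_algebra all_field.
Set Implicit Arguments. Unset Strict Implicit. Unset Printing Implicit Defensive.
Import Order.TTheory GRing.Theory Num.Theory.
Local Open Scope ring_scope.

(* Model of C_n = C[z]/(z^n - 1): an element is represented by its unique
   representative of degree < n, stored as its coefficient row vector
   in 'rV[algC]_n (algC = the algebraic complex numbers, our model of C). *)
Definition Cn (n : nat) := 'rV[algC]_n.

Definition poly_of (n : nat) (p : Cn n) : {poly algC} := \sum_(i < n) p 0 i *: 'X^i.

Definition of_poly (n : nat) (r : {poly algC}) : Cn n :=
  \row_(i < n) (r %% ('X^n - 1))`_i.

Definition circ (n : nat) (eps : algC) (p q : Cn n) : Cn n :=
  of_poly n ((poly_of p \Po (eps *: 'X)) * (poly_of q \Po (eps *: 'X))).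

(* principal powers: x^1 = x, x^(k+1) = x o x^k ; ppow x k = x^(k+1) *)
Fixpoint ppow (n : nat) (eps : algC) (x : Cn n) (k : nat) : Cn n :=
  match k with
  | 0 => x
  | k'.+1 => circ eps x (ppow eps x k')
  end.

Definition pp (n : nat) (eps : algC) (x : Cn n) (m : nat) : Cn n :=
  ppow eps x m.-1.

(* p(alpha), well defined for alpha^n = 1 *)
Definition peval (n : nat) (p : Cn n) (a : algC) : algC := (poly_of p).[a].

Definition beta (n : nat) (eps : algC) (p : Cn n) : algC :=
  \prod_(i < n) peval p (eps ^+ i).

Definition Lmx (n : nat) (eps : algC) (c : Cn n) : 'M[algC]_n :=
  lin1_mx (circ eps c).

(* spectrum of c : multiplicity of each a as an eigenvalue of L_c
   (algebraic multiplicity = multiplicity as root of the char. polynomial) *)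
Definition spectrum (n : nat) (eps : algC) (c : Cn n) : algC -> nat :=
  fun a => mup a (char_poly (Lmx eps c)).

Definition commutative_alg (n : nat) (eps : algC) : Prop :=
  forall x y : Cn n, circ eps x y = circ eps y x.

Definition medial_alg (n : nat) (eps : algC) : Prop :=
  forall x y z w : Cn n,
    circ eps (circ eps x y) (circ eps z w) = circ eps (circ eps x z) (circ eps y w).

Definition isospectral_alg (n : nat) (eps : algC) : Prop :=
  forall c d : Cn n, c != 0 -> circ eps c c = c -> d != 0 -> circ eps d d = d ->
    spectrum eps c =1 spectrum eps d.

(* Main.v *)
Require Import Defs.
From HB Require Import structures.
From mathcomp Require Import all_boot all_order all_algebra all_field.
Import GRing.Theory Num.Theory.
Local Open Scope ring_scope.
Set Implicit Arguments. Unset Strict Implicit.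

Section Basic.
Variable n : nat.
Hypothesis n_gt0 : (0 < n)%N.
Local Notation m := ('X^n - 1 : {poly algC}).

Lemma coef_poly_of (p : Cn n) k :
  (poly_of p)`_k = \sum_(i < n) p 0 i * (k == i)%:R.
Proof.
rewrite /poly_of coef_sum; apply: eq_bigr => i _.
by rewrite coefZ coefXn.
Qed.

Lemma coef_poly_of_ord (p : Cn n) (i : 'I_n) : (poly_of p)`_i = p 0 i.
Proof.
rewrite coef_poly_of (bigD1 i) //= eqxx mulr1 big1 ?addr0 // => j ji.
by rewrite eq_sym (inj_eq val_inj) (negbTE ji) mulr0.
Qed.

Lemma size_poly_of (p : Cn n) : (size (poly_of p) <= n)%N.
Proof.
apply/leq_sizeP => j jn; rewrite coef_poly_of big1 // => i _.
have: (i < j)%N by apply: leq_trans (ltn_ord i) jn.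
by rewrite ltn_neqAle eq_sym => /andP[/negbTE -> _]; rewrite mulr0.
Qed.

Lemma size_m : size m = n.+1.
Proof. exact: size_XnsubC. Qed.

Lemma poly_of_lin a (p q : Cn n) : poly_of (a *: p + q) = a *: poly_of p + poly_of q.
Proof.
rewrite /poly_of scaler_sumr -big_split; apply: eq_bigr => i _.
by rewrite !mxE scalerDl scalerA.
Qed.

Lemma poly_of0 : poly_of (0 : Cn n) = 0.
Proof. by rewrite /poly_of big1 // => i _; rewrite mxE scale0r. Qed.

Lemma of_poly_lin a r s : of_poly n (a *: r + s) = a *: of_poly n r + of_poly n s.
Proof.
by apply/rowP => i; rewrite !mxE modpD modpZl coefD coefZ.
Qed.

Lemma poly_of_polyK r : poly_of (of_poly n r) = r %% m.
Proof.
apply/polyP => k; rewrite coef_poly_of.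
have [kn|kn] := ltnP k n.
  rewrite (bigD1 (Ordinal kn)) //= eqxx mulr1 big1 ?addr0; first by rewrite mxE.
  move=> j jk; rewrite eq_sym; case: eqP => [ek|_]; last by rewrite mulr0.
  by case/eqP: jk; apply: val_inj.
have : (size (r %% m)%R <= k)%N.
  have h : (size (r %% m)%R < n.+1)%N by rewrite -size_m ltn_modp -size_poly_eq0 size_m.
  by apply: leq_trans kn.
move/leq_sizeP => -> //; rewrite big1 // => i _.
have: (i < k)%N by apply: leq_trans (ltn_ord i) kn.
by rewrite ltn_neqAle eq_sym => /andP[/negbTE -> _]; rewrite mulr0.
Qed.

Lemma of_polyK (p : Cn n) : of_poly n (poly_of p) = p.
Proof.
apply/rowP => i; rewrite mxE modp_small ?coef_poly_of_ord //.
by rewrite size_m ltnS size_poly_of.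
Qed.

Lemma horner_mod r a : a ^+ n = 1 -> (r %% m).[a] = r.[a].
Proof.
move=> an; rewrite [in RHS](divp_eq r m) hornerD hornerM !hornerE an subrr.
by rewrite mulr0 add0r.
Qed.

Lemma peval_of_poly r a : a ^+ n = 1 -> peval (of_poly n r) a = r.[a].
Proof. by move=> an; rewrite /peval poly_of_polyK horner_mod. Qed.

Lemma peval_circ eps (p q : Cn n) a : a ^+ n = 1 ->
  peval (circ eps p q) a = peval p (eps * a) * peval q (eps * a).
Proof.
move=> an; rewrite /circ peval_of_poly // hornerM !horner_comp.
by rewrite hornerZ hornerX.
Qed.

Lemma peval_lin c (p q : Cn n) a : peval (c *: p + q) a = c * peval p a + peval q a.
Proof. by rewrite /peval poly_of_lin hornerD hornerZ. Qed.

Lemma peval0 a : peval (0 : Cn n) a = 0.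
Proof. by rewrite /peval poly_of0 horner0. Qed.

End Basic.

Section Eps.
Variables (n : nat) (eps : algC).
Hypothesis n_gt0 : (0 < n)%N.
Hypothesis heps : n.-primitive_root eps.
Local Notation m := ('X^n - 1 : {poly algC}).
Definition e (p : Cn n) k := peval p (eps ^+ k).

Lemma epsn : eps ^+ n = 1.
Proof. exact: prim_expr_order. Qed.

Lemma rootk k : (eps ^+ k) ^+ n = 1.
Proof. by rewrite -exprM mulnC exprM epsn expr1n. Qed.

Lemma e_per p k : e p (k + n) = e p k.
Proof. by rewrite /e exprD epsn mulr1. Qed.

Lemma e_circ p q k : e (circ eps p q) k = e p k.+1 * e q k.+1.
Proof. by rewrite /e peval_circ ?rootk // -exprS. Qed.

Lemma e_lin c p q k : e (c *: p + q) k = c * e p k + e q k.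
Proof. exact: peval_lin. Qed.

Lemma e0 k : e 0 k = 0.
Proof. exact: peval0. Qed.

Lemma e_inj p q : (forall k, (k < n)%N -> e p k = e q k) -> p = q.
Proof.
move=> h; set r := poly_of p - poly_of q.
have r0 : r = 0.
  apply/eqP; apply/negPn/negP => rn0.
  have := max_poly_roots rn0 (rs := [seq eps ^+ k | k <- iota 0 n]).
  rewrite size_map size_iota.
  have -> : all (root r) [seq eps ^+ k | k <- iota 0 n].
    apply/allP => x /mapP [k]; rewrite mem_iota add0n => kn ->.
    by rewrite /root /r hornerD hornerN -/(peval p _) -/(peval q _) -/(e p k) -/(e q k) h // subrr.
  have -> : uniq [seq eps ^+ k | k <- iota 0 n].
    rewrite map_inj_in_uniq ?iota_uniq // => i j; rewrite !mem_iota !add0n => ilt jlt /eqP.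
    by rewrite (eq_prim_root_expr heps) !modn_small // => /eqP.
  move=> /(_ isT isT); rewrite ltnNge.
  have -> : (size r <= n)%N.
    by rewrite /r (leq_trans (size_polyD _ _)) // geq_max size_polyN !size_poly_of.
  by [].
by rewrite -(@of_polyK n n_gt0 p) -(@of_polyK n n_gt0 q); congr (of_poly n _); apply/eqP; rewrite -subr_eq0 -/r r0.
Qed.

Lemma prod_shift1 (f : nat -> algC) : (forall k, f (k + n)%N = f k) ->
  \prod_(i < n) f i.+1 = \prod_(i < n) f i.
Proof.
move=> fp; case: n n_gt0 fp => // n' _ fp.
rewrite big_ord_recr big_ord_recl /= mulrC; congr (_ * _).
by rewrite -(fp 0%N) add0n.
Qed.

Lemma prod_shift (f : nat -> algC) j : (forall k, f (k + n)%N = f k) ->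
  \prod_(i < n) f (i + j)%N = \prod_(i < n) f i.
Proof.
move=> fp; elim: j => [|j IH]; first by apply: eq_bigr => i _; rewrite addn0.
rewrite -IH -(prod_shift1 (f := fun i => f (i + j)%N)); last by move=> k; rewrite addnAC fp.
by apply: eq_bigr => i _; rewrite addnS addSn.
Qed.

End Eps.

Lemma lin1E n (f : 'rV[algC]_n -> 'rV[algC]_n) :
  (forall a x y, f (a *: x + y) = a *: f x + f y) ->
  forall u, u *m lin1_mx f = f u.
Proof.
move=> lf u.
pose g : {linear 'rV[algC]_n -> 'rV[algC]_n} := HB.pack f (GRing.isLinear.Build _ _ _ _ f lf).
exact: (mul_rV_lin1 g).
Qed.

Lemma char_poly_sim n (A B T : 'M[algC]_n) : T \in unitmx -> A *m T = T *m B ->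
  char_poly A = char_poly B.
Proof.
move=> Tu ATB.
have eq : char_poly_mx A *m map_mx polyC T = map_mx polyC T *m char_poly_mx B.
  rewrite /char_poly_mx mulmxBl mulmxBr -!map_mxM ATB; congr (_ - _).
  by rewrite scalar_mxC.
have dT : \det (map_mx polyC T) != 0.
  by rewrite det_map_mx polyC_eq0 -unitfE -unitmxE.
apply: (mulIf dT); rewrite /char_poly -!det_mulmx eq det_mulmx mulrC -det_mulmx //.
Qed.

Section Iso.
Variables (n : nat) (eps : algC).
Hypothesis n_gt0 : (0 < n)%N.
Hypothesis heps : n.-primitive_root eps.
Local Notation e := (e eps).

Definition V : 'M[algC]_n := \matrix_(i < n, k < n) eps ^+ (i * k).

Lemma mulV (p : Cn n) k : (p *m V) 0 k = e p k.
Proof.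
rewrite /e /peval /poly_of horner_sum !mxE; apply: eq_bigr => i _.
by rewrite hornerZ hornerXn mxE -exprM mulnC.
Qed.

Lemma V_unit : V \in unitmx.
Proof.
rewrite -row_free_unit; apply: inj_row_free => v v0.
apply: (e_inj n_gt0 heps) => k kn.
by rewrite e0 -(mulV v (Ordinal kn)) v0 mxE.
Qed.

Lemma interp (w : nat -> algC) : exists u : Cn n, forall k, (k < n)%N -> e u k = w k.
Proof.
exists ((\row_(k < n) w k) *m invmx V) => k kn.
by rewrite -(mulV _ (Ordinal kn)) mulmxKV ?V_unit // mxE.
Qed.

End Iso.

Section Main.
Variables (n : nat) (eps : algC).
Hypothesis n_gt0 : (0 < n)%N.
Hypothesis heps : n.-primitive_root eps.
Local Notation e := (e eps).

Lemma e_ppow (p : Cn n) k j : e (ppow eps p k) j =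
  (\prod_(i < k) e p (j + i).+1) * e p (j + k).
Proof.
elim: k j => [|k IH] j /=; first by rewrite big_ord0 mul1r addn0.
rewrite (e_circ n_gt0 heps) IH big_ord_recl mulrA addn0; congr (_ * _ * _).
  by apply: eq_bigr => i _; rewrite /= addSnnS.
by rewrite addSnnS.
Qed.

Lemma beta_e (p : Cn n) : beta eps p = \prod_(i < n) e p i.
Proof. by []. Qed.

Lemma pp_beta (p : Cn n) : pp eps p n.+1 = beta eps p *: p.
Proof.
apply: (e_inj n_gt0 heps) => k _.
rewrite /pp /= e_ppow -[beta _ _ *: p]addr0 e_lin e0 addr0 beta_e.
rewrite (e_per heps); congr (_ * _).
rewrite -(prod_shift n_gt0 (f := e p) k.+1); last by move=> i; rewrite (e_per heps).
by apply: eq_bigr => i _; rewrite -addSnnS addnC.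
Qed.

Lemma beta_circ (p q : Cn n) : beta eps (circ eps p q) = beta eps p * beta eps q.
Proof.
rewrite !beta_e.
under eq_bigr => i _ do rewrite (e_circ n_gt0 heps).
rewrite big_split /=.
rewrite (prod_shift1 n_gt0 (f := e p)) ?(prod_shift1 n_gt0 (f := e q)) // => k; exact: (e_per heps).
Qed.

Lemma comm_circ : commutative_alg n eps.
Proof. by move=> x y; apply: (e_inj n_gt0 heps) => k _; rewrite !(e_circ n_gt0 heps) mulrC. Qed.

Lemma medial_circ : medial_alg n eps.
Proof.
move=> x y z w; apply: (e_inj n_gt0 heps) => k _; rewrite !(e_circ n_gt0 heps).
rewrite !mulrA; congr (_ * _); rewrite -!mulrA; congr (_ * _); exact: mulrC.
Qed.

Lemma dim_rV : \dim {: 'rV[algC]_n} = n.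
Proof. rewrite dimvf. have h := dim_matrix algC 1 n. rewrite mul1r in h. exact h. Qed.

End Main.

Section Iso2.
Variables (n : nat) (eps : algC).
Hypothesis n_gt0 : (0 < n)%N.
Hypothesis heps : n.-primitive_root eps.
Local Notation e := (e eps).

Lemma circ_lin (c : Cn n) a x y :
  circ eps c (a *: x + y) = a *: circ eps c x + circ eps c y.
Proof.
apply: (e_inj n_gt0 heps) => k _.
rewrite !e_lin !(e_circ n_gt0 heps) e_lin mulrDr mulrCA //.
Qed.

Definition Mu (u : Cn n) (y : Cn n) : Cn n := of_poly n (poly_of u * poly_of y).

Lemma e_Mu u y k : e (Mu u y) k = e u k * e y k.
Proof. by rewrite /e /Mu peval_of_poly ?(rootk heps) // hornerM. Qed.

Lemma Mu_lin u a x y : Mu u (a *: x + y) = a *: Mu u x + Mu u y.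
Proof.
by rewrite /Mu poly_of_lin mulrDr -scalerAr of_poly_lin.
Qed.

Definition one : Cn n := of_poly n 1.

Lemma e_one k : e one k = 1.
Proof. by rewrite /e /one peval_of_poly ?(rootk heps) // hornerC. Qed.

Lemma idem_pow (c : Cn n) : circ eps c c = c ->
  forall k j, e c k = e c (k + j) ^+ (2 ^ j).
Proof.
move=> cc k j; elim: j => [|j IH]; first by rewrite addn0 expr1.
rewrite IH -{1}cc (e_circ n_gt0 heps) -expr2 -exprM expnS mulnC addnS //.
Qed.

Lemma idem_nz (c : Cn n) : c != 0 -> circ eps c c = c -> forall k, e c k != 0.
Proof.
move=> cn0 cc k; apply/negP => /eqP ck; case/negP: cn0; apply/eqP.
apply: (e_inj n_gt0 heps) => i ilt; rewrite e0.
rewrite (idem_pow cc i (k + n - i)) subnKC; last by rewrite (leq_trans (ltnW ilt)) // leq_addl.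
by rewrite (e_per heps) ck expr0n expn_eq0.
Qed.

Lemma idem_prod (c : Cn n) : c != 0 -> circ eps c c = c -> \prod_(i < n) e c i.+1 = 1.
Proof.
move=> cn0 cc.
have sh : \prod_(i < n) e c i.+1 = \prod_(i < n) e c i.
  by apply: (prod_shift1 n_gt0) => k; exact: (e_per heps).
set P := \prod_(i < n) e c i.+1.
have P2 : P = P ^+ 2.
  rewrite {1}/P sh /P -prodrXl; apply: eq_bigr => i _.
  by rewrite (idem_pow cc i 1) addn1 expn1.
have P0 : P != 0 by apply/prodf_neq0 => i _; apply: idem_nz.
apply: (mulIf P0); rewrite mul1r -expr2 -P2 //.
Qed.

Lemma char_poly_idem (c : Cn n) : c != 0 -> circ eps c c = c ->
  char_poly (Lmx eps c) = char_poly (Lmx eps one).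
Proof.
move=> cn0 cc.
pose w k := \prod_(i < k) e c i.+1.
have [u uw] := interp n_gt0 heps w.
have wS k : w k * e c k.+1 = w k.+1 by rewrite /w big_ord_recr.
have uS k : (k < n)%N -> e u k.+1 = w k.+1.
  move=> kn; rewrite leq_eqVlt in kn; case/orP: kn => [/eqP kn|kn]; last exact: uw.
  rewrite kn (_ : e u n = e u 0); last by rewrite -(e_per heps u 0) add0n.
  rewrite uw // /w big_ord0.
  by rewrite (idem_prod cn0 cc).
have unz k : (k < n)%N -> e u k != 0.
  move=> kn; rewrite uw //; apply/prodf_neq0 => i _; exact: idem_nz.
pose T := lin1_mx (Mu u).
apply: (@char_poly_sim _ _ _ T).
  rewrite -row_free_unit; apply: inj_row_free => v.
  rewrite /T lin1E; last exact: Mu_lin.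
  move=> Mv0; apply: (e_inj n_gt0 heps) => k kn; rewrite e0.
  have := e_Mu u v k; rewrite Mv0 e0 => /esym/eqP; rewrite mulf_eq0 (negbTE (unz k kn)) /=.
  by move/eqP.
apply/row_matrixP => i; rewrite !rowE !mulmxA /Lmx /T.
rewrite !lin1E; try (by move=> *; apply: circ_lin); try (by move=> *; apply: Mu_lin).
apply: (e_inj n_gt0 heps) => k kn.
rewrite e_Mu !(e_circ n_gt0 heps) e_Mu e_one mul1r uS // -wS uw // mulrA //.
Qed.

Lemma iso : isospectral_alg n eps.
Proof.
move=> c d cn0 cc dn0 dd a.
by rewrite /spectrum (char_poly_idem cn0 cc) (char_poly_idem dn0 dd).
Qed.

End Iso2.

Theorem theorem2p5 (n : nat) (eps : algC) (hn : (2 <= n)%N)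
    (heps : n.-primitive_root eps) :
  [/\ \dim {: 'rV[algC]_n} = n,
      commutative_alg n eps,
      medial_alg n eps,
      isospectral_alg n eps
    & (forall p : Cn n, pp eps p n.+1 = beta eps p *: p) /\
      (forall p q : Cn n, beta eps (circ eps p q) = beta eps p * beta eps q)].
Proof.
have n_gt0 : (0 < n)%N by apply: leq_trans hn.
split.
- exact: dim_rV.
- exact: comm_circ n_gt0 heps.
- exact: medial_circ n_gt0 heps.
- exact: iso n_gt0 heps.
split => [p|p q]; [exact: pp_beta n_gt0 heps p | exact: beta_circ n_gt0 heps p q].
Qed.
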